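(* No absolute prime has all four of the digits $1,3,7,9$ appearing in its decimal representation.
   Context: For a positive integer $N$ with decimal representation $d_1d_2\dots d_n$ (digits $d_k\in\{0,\dots,9\}$, $d_1\neq 0$), a permutation of the digits of $N$ is any integer $\sum_{k=1}^{n} d_{\sigma(k)}10^{n-k}$ with $\sigma$ a permutation of $\{1,\dots,n\}$. $N$ is called an absolute prime if every integer obtained by a permutation of the digits of $N$ (including $N$ itself) is prime. *)

(* Defs.v *)
From mathcomp Require Import all_boot.
Set Implicit Arguments. Unset Strict Implicit. Unset Printing Implicit Defensive.

(* Decimal digits of n, most significant first: [d_1; ...; d_n]; digits 0 = [::]. *)
Fixpoint digits_aux (fuel n : nat) : seq nat :=
  match fuel with
  | 0 => [::]
  | f.+1 => if n == 0 then [::] else rcons (digits_aux f (n %/ 10)) (n %% 10)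
  end.
Definition digits (n : nat) : seq nat := digits_aux n n.

Definition from_digits (s : seq nat) : nat := foldl (fun acc d => acc * 10 + d) 0 s.

(* N is an absolute prime: every integer obtained by permuting its digits
   (leading zeros allowed, as in the definition) is prime. *)
Definition absolute_prime (N : nat) : Prop :=
  0 < N /\ forall s : seq nat, perm_eq s (digits N) -> prime (from_digits s).

(* Main.v *)
Require Import Defs.
From mathcomp Require Import all_boot.
From mathcomp Require Import zify.

Lemma foldl_shift (b : seq nat) (x : nat) :
  foldl (fun acc d => acc * 10 + d) x b =
  x * 10 ^ size b + foldl (fun acc d => acc * 10 + d) 0 b.
Proof.
elim: b x => [|d b IH] x /=; first by rewrite expn0 muln1 addn0.
rewrite IH [in RHS]IH add0n expnS; lia.
Qed.

Lemma from_digits_cat (a b : seq nat) :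
  from_digits (a ++ b) = from_digits a * 10 ^ size b + from_digits b.
Proof. by rewrite /from_digits foldl_cat foldl_shift. Qed.

Lemma choose_perm (T : nat) : exists p : seq nat,
  perm_eq p [:: 1; 3; 7; 9] /\ size p = 4 /\ 7 %| T * 10 ^ 4 + from_digits p
  /\ 10*10*10 <= from_digits p.
Proof.
have := ltn_pmod T (isT : 0 < 7).
have E := divn_eq T 7.
set r := T %% 7 in E *; set q := T %/ 7 in E *.
case: r E => [|[|[|[|[|[|[|r]]]]]]] E _ //.
- exists [:: 1;3;7;9]; split => //; split => //; split => //; apply/dvdnP; exists (q*(10*10*10*10) + 197); rewrite /from_digits /= (_ : 10 ^ 4 = 10*10*10*10) //; lia.
- exists [:: 1;7;3;9]; split => //; split => //; split => //; apply/dvdnP; exists (q*(10*10*10*10) + (16*100+77)); rewrite /from_digits /= (_ : 10 ^ 4 = 10*10*10*10) //; lia.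
- exists [:: 1;9;7;3]; split => //; split => //; split => //; apply/dvdnP; exists (q*(10*10*10*10) + (31*100+39)); rewrite /from_digits /= (_ : 10 ^ 4 = 10*10*10*10) //; lia.
- exists [:: 3;7;1;9]; split => //; split => //; split => //; apply/dvdnP; exists (q*(10*10*10*10) + (48*100+17)); rewrite /from_digits /= (_ : 10 ^ 4 = 10*10*10*10) //; lia.
- exists [:: 1;9;3;7]; split => //; split => //; split => //; apply/dvdnP; exists (q*(10*10*10*10) + (59*100+91)); rewrite /from_digits /= (_ : 10 ^ 4 = 10*10*10*10) //; lia.
- exists [:: 1;7;9;3]; split => //; split => //; split => //; apply/dvdnP; exists (q*(10*10*10*10) + (73*100+99)); rewrite /from_digits /= (_ : 10 ^ 4 = 10*10*10*10) //; lia.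
- exists [:: 1;3;9;7]; split => //; split => //; split => //; apply/dvdnP; exists (q*(10*10*10*10) + (87*100+71)); rewrite /from_digits /= (_ : 10 ^ 4 = 10*10*10*10) //; lia.
Qed.

Theorem lemma2 (N : nat) :
  absolute_prime N ->
  ~ [/\ 1 \in digits N, 3 \in digits N, 7 \in digits N & 9 \in digits N].
Proof.
move=> [_ HP] [h1 h3 h7 h9].
set s := digits N in h1 h3 h7 h9 HP.
have P1 := perm_to_rem h1.
have h3' : 3 \in rem 1 s by rewrite (perm_mem P1) in h3.
have P3 := perm_to_rem h3'.
have h7' : 7 \in rem 3 (rem 1 s).
  by rewrite (perm_mem P1) inE /= (perm_mem P3) in h7.
have P7 := perm_to_rem h7'.
have h9' : 9 \in rem 7 (rem 3 (rem 1 s)).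
  by rewrite (perm_mem P1) inE /= (perm_mem P3) inE /= (perm_mem P7) in h9.
have P9 := perm_to_rem h9'.
set t := rem 9 _ in P9.
have Ps : perm_eq s ([:: 1; 3; 7; 9] ++ t).
  apply: (perm_trans P1); rewrite /= perm_cons.
  apply: (perm_trans P3); rewrite /= perm_cons.
  apply: (perm_trans P7); rewrite /= perm_cons; exact: P9.
have [p [Pp [Sp [Dp Bp]]]] := choose_perm (from_digits t).
have Pt : perm_eq (t ++ p) s.
  rewrite perm_sym; apply: (perm_trans Ps).
  rewrite perm_catC perm_cat2l perm_sym //.
have := HP _ Pt.
rewrite from_digits_cat Sp.
have Bx : 10 * 10 * 10 <= from_digits t * 10 ^ 4 + from_digits p by apply: leq_trans Bp (leq_addl _ _).
move: (from_digits t * 10 ^ 4 + from_digits p) Dp Bx => x Dx Bx Px.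
have := prime_nt_dvdP Px (isT : 7 != 1) Dx.
move=> E; rewrite -E in Bx; done.
Qed.
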